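(* Realize $\mathrm{SO}(3)\times\mathbb{R}$ as the group of $4\times4$ matrices $(C,v)=\begin{pmatrix}C&0\\0&e^v\end{pmatrix}$, $C\in\mathrm{SO}(3)$, $v\in\mathbb{R}$, and let $E_1=e_{32}-e_{23}$, $E_2=e_{13}-e_{31}$, $E_3=e_{21}-e_{12}$, $E_4=e_{44}$ ($e_{jk}$ the $4\times4$ matrix units), $e_1=E_1$, $e_2=E_4-E_3$, $e_3=E_2$, $e_4=E_3$. For $\alpha_1^2+\alpha_2^2+\alpha_3^2=1$, $\beta\in\mathbb{R}$ let $$\gamma_1(t)=\gamma_1(\alpha_1,\alpha_2,\alpha_3,\beta;t)=\exp\bigl(t(\alpha_1e_1+\alpha_2e_2+\alpha_3e_3+\beta e_4)\bigr)\exp(-t\beta e_4)$$ (the arclength geodesics through $\mathrm{Id}$ of the left-invariant sub-Riemannian metric $\rho_1$ defined by $\mathrm{span}(e_1,e_2,e_3)$ with orthonormal basis $e_1,e_2,e_3$). Put $w_1=\sqrt{1-\alpha_2^2+(\beta-\alpha_2)^2}$, $\mu_1=\frac{\sin w_1t}{w_1}$, $\nu_1=\frac{1-\cos w_1t}{w_1^2}$, and $\delta=\beta-\alpha_2$. If $\alpha_2\neq\pm1$, then $\gamma_1(t)=(C,v)(t)$ with $v(t)=\alpha_2t$ and the columns of $C(t)\in\mathrm{SO}(3)$ given by $$C_1=\begin{pmatrix}(1-\nu_1(\alpha_3^2+\delta^2))\cos\beta t-(\alpha_1\alpha_3\nu_1-\delta\mu_1)\sin\beta t\\ (\alpha_1\alpha_3\nu_1+\delta\mu_1)\cos\beta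 t-(1-\nu_1(\alpha_1^2+\delta^2))\sin\beta t\\ (\alpha_1\delta\nu_1-\alpha_3\mu_1)\cos\beta t-(\alpha_3\delta\nu_1+\alpha_1\mu_1)\sin\beta t\end{pmatrix},$$ $$C_2=\begin{pmatrix}(1-\nu_1(\alpha_3^2+\delta^2))\sin\beta t+(\alpha_1\alpha_3\nu_1-\delta\mu_1)\cos\beta t\\ (\alpha_1\alpha_3\nu_1+\delta\mu_1)\sin\beta t+(1-\nu_1(\alpha_1^2+\delta^2))\cos\beta t\\ (\alpha_1\delta\nu_1-\alpha_3\mu_1)\sin\beta t+(\alpha_3\delta\nu_1+\alpha_1\mu_1)\cos\beta t\end{pmatrix},\quad C_3=\begin{pmatrix}\alpha_1\delta\nu_1+\alpha_3\mu_1\\ \alpha_3\delta\nu_1-\alpha_1\mu_1\\ 1-\nu_1(\alpha_1^2+\alpha_3^2)\end{pmatrix}.$$ If $\alpha_2=\pm1$, then $\gamma_1(t)=(C,v)(t)$ with $v(t)=\alpha_2t$ and $C(t)=\begin{pmatrix}\cos\alpha_2t&\sin\alpha_2t&0\\-\sin\alpha_2t&\cos\alpha_2t&0\\0&0&1\end{pmatrix}$.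
   Context: The matrices $E_1,\dots,E_4$ satisfy $[E_1,E_2]=E_3$, $[E_2,E_3]=E_1$, $[E_3,E_1]=E_2$, $[E_i,E_4]=0$. *)

(* Defs.v *)
From HB Require Import structures.
From mathcomp Require Import all_boot all_order all_algebra.
From mathcomp Require Import all_classical all_reals all_analysis.
Set Implicit Arguments. Unset Strict Implicit. Unset Printing Implicit Defensive.
Import Order.TTheory GRing.Theory Num.Theory.
Local Open Scope ring_scope.

Section Defs.
Variable R : realType.

Definition expm (n : nat) (A : 'M[R]_n.+1) : 'M[R]_n.+1 :=
  \matrix_(i, j) limn (fun N : nat => \sum_(k < N) (A ^+ k) i j / (k`!)%:R).

(* 4x4 matrix units e_{jk}, indices 1-based as in the paper. *)
Definition munit (j k : nat) : 'M[R]_4 :=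
  \matrix_(a, b) ((a.+1 == j) && (b.+1 == k))%:R.

Definition E1 : 'M[R]_4 := munit 3 2 - munit 2 3.
Definition E2 : 'M[R]_4 := munit 1 3 - munit 3 1.
Definition E3 : 'M[R]_4 := munit 2 1 - munit 1 2.
Definition E4 : 'M[R]_4 := munit 4 4.

Definition e1 : 'M[R]_4 := E1.
Definition e2 : 'M[R]_4 := E4 - E3.
Definition e3 : 'M[R]_4 := E2.
Definition e4 : 'M[R]_4 := E3.

Definition gamma1 (a1 a2 a3 b t : R) : 'M[R]_4 :=
  expm (t *: (a1 *: e1 + a2 *: e2 + a3 *: e3 + b *: e4)) *m expm ((- (t * b)) *: e4).

Definition vec3 (x y z : R) : 'cV[R]_3 := \col_i [:: x; y; z]`_i.

Definition mx_of_cols (c1 c2 c3 : 'cV[R]_3) : 'M[R]_3 :=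
  \matrix_(i, j) (nth c1 [:: c1; c2; c3] j) i ord0.

Definition CV (C : 'M[R]_3) (v : R) : 'M[R]_4 :=
  block_mx C 0 0 (expR v)%:M.

End Defs.

(* Main.v *)
Require Import Defs.
From HB Require Import structures.
From mathcomp Require Import all_boot all_order all_algebra.
From mathcomp Require Import all_classical all_reals all_analysis.
From mathcomp Require Import ring lra.
Import Order.TTheory GRing.Theory Num.Theory numFieldNormedType.Exports.
Local Open Scope classical_set_scope.
Local Open Scope ring_scope.

Section S.
Variable R : realType.
Notation P := (munit R 4 4).

Lemma PP : P *m P = P.
Proof.
apply/matrixP => i j; rewrite !mxE.
rewrite !big_ord_recl big_ord0 !mxE.
case: i => [[|[|[|[|i]]]] Hi]; case: j => [[|[|[|[|j]]]] Hj]; rewrite /= ?(mulr0,mul0r,addr0,mulr1,add0r) //.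
Qed.

Lemma powA (K : 'M[R]_4) c : K *m P = 0 -> P *m K = 0 ->
  forall k, (K + c *: P) ^+ k.+1 = K ^+ k.+1 + c ^+ k.+1 *: P.
Proof.
move=> KP PK; elim=> [|k IH]; first by rewrite !expr1.
rewrite exprSr IH mulrDl !mulrDr -!mulmxE -!scalemxAl -!scalemxAr PK PP.
have KkP : K ^+ k.+1 *m P = 0 by rewrite exprSr -mulmxE -mulmxA KP mulmx0.
by rewrite KkP !scaler0 addr0 add0r scalerA -exprSr mulmxE -exprSr.
Qed.

Definition sc (x : R) n := (odd n)%:R * (-1) ^+ n.-1./2 * x ^+ n.
Definition cc (x : R) n := (~~ odd n)%:R * (-1) ^+ n./2 * x ^+ n.

Lemma powK (K : 'M[R]_4) (x : R) : K ^+ 3 = - (x ^+ 2) *: K ->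
  forall k, x ^+ 2 *: K ^+ k.+1 = (x * sc x k.+1) *: K - cc x k.+1 *: K ^+ 2.
Proof.
move=> K3; elim=> [|k IH].
  by rewrite /sc /cc /= expr0 expr1 !mul1r !mul0r scale0r subr0 expr2.
have E1 : x * sc x k.+2 = cc x k.+1 * x ^+ 2.
  rewrite /sc /cc /= negbK; case: (odd k); rewrite /= ?mul0r ?mulr0 //; rewrite !exprS; ring.
have E2 : cc x k.+2 = - (x * sc x k.+1).
  rewrite /sc /cc /= negbK; case: (odd k); rewrite /= ?mul0r ?mulr0 ?oppr0 //; rewrite !exprS; ring.
rewrite [K ^+ k.+2]exprSr scalerAl IH mulrBl -!scalerAl -expr2 -exprSr K3 E1 E2.
by rewrite scalerA mulrN !scaleNr !opprK addrC.
Qed.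

Lemma expm_core (K : 'M[R]_4) (c x : R) : x != 0 -> K *m P = 0 -> P *m K = 0 ->
  K ^+ 3 = - (x ^+ 2) *: K ->
  expm (K + c *: P) = 1 + (sin x / x) *: K + ((1 - cos x) / x ^+ 2) *: K ^+ 2
                      + (expR c - 1) *: P.
Proof.
move=> x0 KP PK K3.
apply/matrixP => i j; rewrite [LHS]mxE.
set u := (fun N => _).
have Hs : series (sin_coeff x) @ \oo --> sin x.
  by rewrite unlock; exact: is_cvg_series_sin_coeff.
have Hc : series (cos_coeff x) @ \oo --> cos x.
  by rewrite unlock; exact: is_cvg_series_cos_coeff.
have He : series (exp_coeff c) @ \oo --> expR c.
  exact: is_cvg_series_exp_coeff.
have E : forall k, ((K + c *: P) ^+ k.+1) i j / k.+1`!%:R = x ^-2 * (x * K i j * sin_coeff x k.+1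
     - (K ^+ 2) i j * cos_coeff x k.+1 + x ^+ 2 * P i j * exp_coeff c k.+1).
  move=> k; rewrite powA // mxE [in RHS]mxE.
  have := congr1 (fun M : 'M[R]_4 => M i j) (powK K x K3 k).
  rewrite /= !mxE => HK.
  have -> : (K ^+ k.+1) i j = x ^-2 * (x ^+ 2 * (K ^+ k.+1) i j) by field.
  rewrite HK /sin_coeff /cos_coeff /exp_coeff /sc /cc /=.
  rewrite -exprnP. have hf : (k.+1)`!%:R != 0 :> R by rewrite pnatr_eq0 -lt0n fact_gt0.
  by field; rewrite hf x0.
have s0 : sin_coeff x 0 = 0 by rewrite /sin_coeff /= !mul0r.
have c0 : cos_coeff x 0 = 1 by rewrite /cos_coeff /= expr0z expr0 fact0 invr1 !mulr1.
have e0 : exp_coeff c 0 = 1 by rewrite /exp_coeff /= expr0 fact0 invr1 !mulr1.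
have Hu : forall N, u N.+1 = x^-2 * (x^+2 * (1:'M[R]_4) i j + x * K i j * series (sin_coeff x) N.+1
   - (K ^+ 2) i j * (series (cos_coeff x) N.+1 - 1) + x^+2 * P i j * (series (exp_coeff c) N.+1 - 1)).
  move=> N; rewrite /u big_ord_recl.
  rewrite (eq_bigr (fun k : 'I_N => x ^- 2 * (x * K i j * sin_coeff x k.+1 - (K ^+ 2) i j * cos_coeff x k.+1 +
     x ^+ 2 * P i j * exp_coeff c k.+1))); last by move=> k _; exact: E.
  rewrite -mulr_sumr big_split big_split /= sumrN -!mulr_sumr.
  rewrite /series /= !big_nat_recl // !big_mkord s0 c0 e0 expr0 fact0 divr1. by field.
have -> : (1 + (sin x / x) *: K + ((1 - cos x) / x ^+ 2) *: K ^+ 2 + (expR c - 1) *: P) i j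
  = x^-2 * (x^+2 * (1:'M[R]_4) i j + x * K i j * sin x
   - (K ^+ 2) i j * (cos x - 1) + x^+2 * P i j * (expR c - 1)).
  by rewrite !mxE; field.
apply: cvg_lim; first exact: Rhausdorff.
rewrite -cvg_shiftS.
have -> : [sequence u n.+1]_n = (fun N => x^-2 * (x^+2 * (1:'M[R]_4) i j + x * K i j * series (sin_coeff x) N.+1
   - (K ^+ 2) i j * (series (cos_coeff x) N.+1 - 1) + x^+2 * P i j * (series (exp_coeff c) N.+1 - 1))).
  by apply/funext => N; exact: Hu.
move: Hs Hc He; rewrite -!(cvg_shiftS (series _)) => Hs Hc He.
apply: cvgMl_tmp.
apply: cvgD; last by apply: cvgMl_tmp; apply: cvgB => //; exact: cvg_cst.
apply: cvgB; last by apply: cvgMl_tmp; apply: cvgB => //; exact: cvg_cst.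
apply: cvgD; first exact: cvg_cst.
by apply: cvgMl_tmp.
Qed.

Lemma expm_sJ (J : 'M[R]_4) (s c w : R) : w != 0 -> J *m P = 0 -> P *m J = 0 ->
  J ^+ 3 = - (w ^+ 2) *: J ->
  expm (s *: J + c *: P) = 1 + (sin (w * s) / w) *: J
     + ((1 - cos (w * s)) / w ^+ 2) *: J ^+ 2 + (expR c - 1) *: P.
Proof.
move=> w0 JP PJ J3.
have [->|s0] := eqVneq s 0.
  rewrite scale0r mulr0 sin0 cos0 subrr !mul0r !scale0r !addr0.
  have := @expm_core 0 c 1 (oner_neq0 _) (mul0mx _ _) (mulmx0 _ _).
  rewrite expr0n /= scaler0 => /(_ erefl).
  by rewrite expr0n /= !scaler0 !addr0 => ->.
have ws0 : w * s != 0 by rewrite mulf_neq0.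
rewrite (@expm_core (s *: J) c (w * s) ws0).
- rewrite [(s *: J) ^+ 2]exprZn !scalerA; congr (_ + _ *: _ + _ *: _ + _); field; rewrite ?w0 ?s0 //.
- by rewrite -scalemxAl JP scaler0.
- by rewrite -scalemxAr PJ scaler0.
- by rewrite exprZn J3 !scalerA; congr (_ *: _); ring.
Qed.

End S.

Section S2.
Variable R : realType.
Notation P := (munit R 4 4).
Definition mk4 (a00 a01 a02 a03 a10 a11 a12 a13 a20 a21 a22 a23 a30 a31 a32 a33 : R) : 'M[R]_4 :=
  \matrix_(i, j) nth 0 (nth [::] [:: [:: a00; a01; a02; a03]; [:: a10; a11; a12; a13]; [:: a20; a21; a22; a23]; [:: a30; a31; a32; a33]] i) j.
Ltac mxent := apply/matrixP; case => [[|[|[|[|?]]]] ?] //; case => [[|[|[|[|?]]]] ?] //.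
Lemma mk4_add a00 a01 a02 a03 a10 a11 a12 a13 a20 a21 a22 a23 a30 a31 a32 a33 b00 b01 b02 b03 b10 b11 b12 b13 b20 b21 b22 b23 b30 b31 b32 b33 :
  mk4 a00 a01 a02 a03 a10 a11 a12 a13 a20 a21 a22 a23 a30 a31 a32 a33 + mk4 b00 b01 b02 b03 b10 b11 b12 b13 b20 b21 b22 b23 b30 b31 b32 b33 = (mk4 (a00 + b00) (a01 + b01) (a02 + b02) (a03 + b03) (a10 + b10) (a11 + b11) (a12 + b12) (a13 + b13) (a20 + b20) (a21 + b21) (a22 + b22) (a23 + b23) (a30 + b30) (a31 + b31) (a32 + b32) (a33 + b33)).
Proof. by mxent; rewrite !mxE. Qed.
Lemma mk4_sub a00 a01 a02 a03 a10 a11 a12 a13 a20 a21 a22 a23 a30 a31 a32 a33 b00 b01 b02 b03 b10 b11 b12 b13 b20 b21 b22 b23 b30 b31 b32 b33 :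
  mk4 a00 a01 a02 a03 a10 a11 a12 a13 a20 a21 a22 a23 a30 a31 a32 a33 - mk4 b00 b01 b02 b03 b10 b11 b12 b13 b20 b21 b22 b23 b30 b31 b32 b33 = (mk4 (a00 - b00) (a01 - b01) (a02 - b02) (a03 - b03) (a10 - b10) (a11 - b11) (a12 - b12) (a13 - b13) (a20 - b20) (a21 - b21) (a22 - b22) (a23 - b23) (a30 - b30) (a31 - b31) (a32 - b32) (a33 - b33)).
Proof. by mxent; rewrite !mxE. Qed.
Lemma mk4_scale (c : R) a00 a01 a02 a03 a10 a11 a12 a13 a20 a21 a22 a23 a30 a31 a32 a33 :
  c *: mk4 a00 a01 a02 a03 a10 a11 a12 a13 a20 a21 a22 a23 a30 a31 a32 a33 = (mk4 (c * a00) (c * a01) (c * a02) (c * a03) (c * a10) (c * a11) (c * a12) (c * a13) (c * a20) (c * a21) (c * a22) (c * a23) (c * a30) (c * a31) (c * a32) (c * a33)).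
Proof. by mxent; rewrite !mxE. Qed.
Lemma mk4_mul a00 a01 a02 a03 a10 a11 a12 a13 a20 a21 a22 a23 a30 a31 a32 a33 b00 b01 b02 b03 b10 b11 b12 b13 b20 b21 b22 b23 b30 b31 b32 b33 :
  mk4 a00 a01 a02 a03 a10 a11 a12 a13 a20 a21 a22 a23 a30 a31 a32 a33 *m mk4 b00 b01 b02 b03 b10 b11 b12 b13 b20 b21 b22 b23 b30 b31 b32 b33 = (mk4 (a00 * b00 + a01 * b10 + a02 * b20 + a03 * b30) (a00 * b01 + a01 * b11 + a02 * b21 + a03 * b31) (a00 * b02 + a01 * b12 + a02 * b22 + a03 * b32) (a00 * b03 + a01 * b13 + a02 * b23 + a03 * b33) (a10 * b00 + a11 * b10 + a12 * b20 + a13 * b30) (a10 * b01 + a11 * b11 + a12 * b21 + a13 * b31) (a10 * b02 + a11 * b12 + a12 * b22 + a13 * b32) (a10 * b03 + a11 * b13 + a12 * b23 + a13 * b33) (a20 * b00 + a21 * b10 + a22 * b20 + a23 * b30) (a20 * b01 + a21 * b11 + a22 * b21 + a23 * b31) (a20 * b02 + a21 * b12 + a22 * b22 + a23 * b32) (a20 * b03 + a21 * b13 + a22 * b23 + a23 * b33) (a30 * b00 + a31 * b10 + a32 * b20 + a33 * b30) (a30 * b01 + a31 * b11 + a32 * b21 + a33 * b31) (a30 * b02 + a31 * b12 + a32 * b22 + a33 * b32) (a30 * b03 + a31 * b13 + a32 * b23 + a33 * b33)).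
Proof. mxent; rewrite !mxE !big_ord_recl big_ord0 !mxE /=; ring. Qed.
Lemma mk4_one : (1 : 'M[R]_4) = (mk4 (1) (0) (0) (0) (0) (1) (0) (0) (0) (0) (1) (0) (0) (0) (0) (1)).
Proof. by mxent; rewrite !mxE. Qed.
Lemma mk4_zero : (0 : 'M[R]_4) = (mk4 (0) (0) (0) (0) (0) (0) (0) (0) (0) (0) (0) (0) (0) (0) (0) (0)).
Proof. by mxent; rewrite !mxE. Qed.
Lemma munit32 : munit R 3 2 = (mk4 (0) (0) (0) (0) (0) (0) (0) (0) (0) (1) (0) (0) (0) (0) (0) (0)).
Proof. by mxent; rewrite !mxE. Qed.
Lemma munit23 : munit R 2 3 = (mk4 (0) (0) (0) (0) (0) (0) (1) (0) (0) (0) (0) (0) (0) (0) (0) (0)).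
Proof. by mxent; rewrite !mxE. Qed.
Lemma munit13 : munit R 1 3 = (mk4 (0) (0) (1) (0) (0) (0) (0) (0) (0) (0) (0) (0) (0) (0) (0) (0)).
Proof. by mxent; rewrite !mxE. Qed.
Lemma munit31 : munit R 3 1 = (mk4 (0) (0) (0) (0) (0) (0) (0) (0) (1) (0) (0) (0) (0) (0) (0) (0)).
Proof. by mxent; rewrite !mxE. Qed.
Lemma munit21 : munit R 2 1 = (mk4 (0) (0) (0) (0) (1) (0) (0) (0) (0) (0) (0) (0) (0) (0) (0) (0)).
Proof. by mxent; rewrite !mxE. Qed.
Lemma munit12 : munit R 1 2 = (mk4 (0) (1) (0) (0) (0) (0) (0) (0) (0) (0) (0) (0) (0) (0) (0) (0)).
Proof. by mxent; rewrite !mxE. Qed.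
Lemma munit44 : munit R 4 4 = (mk4 (0) (0) (0) (0) (0) (0) (0) (0) (0) (0) (0) (0) (0) (0) (0) (1)).
Proof. by mxent; rewrite !mxE. Qed.

Ltac tomk4 := rewrite ?(munit32, munit23, munit13, munit31, munit21, munit12, munit44, mk4_one, mk4_zero);
  rewrite ?(mk4_add, mk4_sub, mk4_scale, mk4_mul).
Ltac mk4ring := tomk4; f_equal; ring.

Definition JJ (p q r : R) : 'M[R]_4 := p *: E1 R + q *: E2 R + r *: E3 R.

Lemma JJP p q r : JJ p q r *m P = 0.
Proof. rewrite /JJ /E1 /E2 /E3; mk4ring. Qed.
Lemma PJJ p q r : P *m JJ p q r = 0.
Proof. rewrite /JJ /E1 /E2 /E3; mk4ring. Qed.
Lemma JJ3 p q r : JJ p q r ^+ 3 = - (p ^+ 2 + q ^+ 2 + r ^+ 2) *: JJ p q r.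
Proof. rewrite !exprS expr0 mulr1 -!mulmxE /JJ /E1 /E2 /E3; mk4ring. Qed.

Lemma CV_cols (x11 x21 x31 x12 x22 x32 x13 x23 x33 v : R) :
  CV (mx_of_cols (vec3 x11 x21 x31) (vec3 x12 x22 x32) (vec3 x13 x23 x33)) v =
  mk4 x11 x12 x13 0 x21 x22 x23 0 x31 x32 x33 0 0 0 0 (expR v).
Proof.
apply/matrixP => i j; rewrite /CV !mxE.
case: (@splitP 3 1 i) => i' Hi'; rewrite !mxE; case: (@splitP 3 1 j) => j' Hj'; rewrite !mxE.
- rewrite Hi' Hj'; case: i' {Hi'} => [[|[|[|?]]] ?] //; case: j' {Hj'} => [[|[|[|?]]] ?] //; by rewrite /= !mxE.
- rewrite Hi' Hj'; case: i' {Hi'} => [[|[|[|?]]] ?] //; case: j' {Hj'} => [[|?] ?] //.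
- rewrite Hi' Hj'; case: i' {Hi'} => [[|?] ?] //; case: j' {Hj'} => [[|[|[|?]]] ?] //.
- rewrite Hi' Hj'; case: i' {Hi'} => [[|?] ?] //; case: j' {Hj'} => [[|?] ?] //=.
Qed.
End S2.
Ltac tomk4 := rewrite ?(munit32, munit23, munit13, munit31, munit21, munit12, munit44, mk4_one, mk4_zero);
  rewrite ?(mk4_add, mk4_sub, mk4_scale, mk4_mul).
Ltac mk4ring := tomk4; f_equal; ring.


Local Close Scope classical_set_scope.

Theorem theorem8 (R : realType) (a1 a2 a3 b : R) :
  a1 ^+ 2 + a2 ^+ 2 + a3 ^+ 2 = 1 ->
  (a2 != 1 -> a2 != -1 ->
    let d := b - a2 in
    let w := Num.sqrt (1 - a2 ^+ 2 + d ^+ 2) in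
    forall t : R,
    let mu := sin (w * t) / w in
    let nu := (1 - cos (w * t)) / w ^+ 2 in
    let cb := cos (b * t) in
    let sb := sin (b * t) in
    gamma1 a1 a2 a3 b t =
    CV (mx_of_cols
          (vec3 ((1 - nu * (a3 ^+ 2 + d ^+ 2)) * cb - (a1 * a3 * nu - d * mu) * sb)
                ((a1 * a3 * nu + d * mu) * cb - (1 - nu * (a1 ^+ 2 + d ^+ 2)) * sb)
                ((a1 * d * nu - a3 * mu) * cb - (a3 * d * nu + a1 * mu) * sb))
          (vec3 ((1 - nu * (a3 ^+ 2 + d ^+ 2)) * sb + (a1 * a3 * nu - d * mu) * cb)
                ((a1 * a3 * nu + d * mu) * sb + (1 - nu * (a1 ^+ 2 + d ^+ 2)) * cb)
                ((a1 * d * nu - a3 * mu) * sb + (a3 * d * nu + a1 * mu) * cb))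
          (vec3 (a1 * d * nu + a3 * mu)
                (a3 * d * nu - a1 * mu)
                (1 - nu * (a1 ^+ 2 + a3 ^+ 2))))
       (a2 * t)) /\
  ((a2 = 1 \/ a2 = -1) ->
    forall t : R,
    gamma1 a1 a2 a3 b t =
    CV (mx_of_cols (vec3 (cos (a2 * t)) (- sin (a2 * t)) 0)
                   (vec3 (sin (a2 * t)) (cos (a2 * t)) 0)
                   (vec3 0 0 1))
       (a2 * t)).
Proof.
move=> hsum.
have J3one : JJ R 0 0 1 ^+ 3 = - (1 ^+ 2) *: JJ R 0 0 1.
  by rewrite JJ3; congr (_ *: _); ring.
have A2 : forall t, (- (t * b)) *: e4 R = (- (t * b)) *: JJ R 0 0 1 + 0 *: munit R 4 4.
  by move=> t; rewrite /e4 /JJ /E1 /E2 /E3; mk4ring.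
split.
- move=> h1 h2 d w t mu nu cb sb.
  have h12 : 0 <= a1 ^+ 2 + a3 ^+ 2 by rewrite addr_ge0 // sqr_ge0.
  have w2 : w ^+ 2 = a1 ^+ 2 + a3 ^+ 2 + d ^+ 2.
    rewrite sqr_sqrtr; first by rewrite -hsum; ring.
    by rewrite (_ : 1 - a2 ^+ 2 = a1 ^+ 2 + a3 ^+ 2) ?addr_ge0 ?sqr_ge0 // -hsum; ring.
  have w0 : w != 0.
    apply/negP => /eqP w0.
    have a2n : a2 ^+ 2 != 1 by rewrite sqrf_eq1 negb_or h1 h2.
    have : a1 ^+ 2 + a3 ^+ 2 + d ^+ 2 = 0 by rewrite -w2 w0 expr0n.
    move=> H; move/eqP: a2n; apply.
    have := sqr_ge0 d; have := sqr_ge0 a1; have := sqr_ge0 a3. lra.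
  have J3 : JJ R a1 a3 d ^+ 3 = - (w ^+ 2) *: JJ R a1 a3 d by rewrite JJ3 w2.
  have A1 : t *: (a1 *: e1 R + a2 *: e2 R + a3 *: e3 R + b *: e4 R)
       = t *: JJ R a1 a3 d + (t * a2) *: munit R 4 4.
    by rewrite /e1 /e2 /e3 /e4 /JJ /E1 /E2 /E3 /E4 /d; mk4ring.
  rewrite /gamma1 A1 A2 (@expm_sJ R _ t (t * a2) w w0 (JJP _ _ _ _) (PJJ _ _ _ _) J3).
  rewrite (@expm_sJ R _ (- (t * b)) 0 1 (oner_neq0 _) (JJP _ _ _ _) (PJJ _ _ _ _) J3one).
  rewrite CV_cols /mu /nu /cb /sb expR0 subrr mul1r sinN cosN expr1n !divr1 [t * b]mulrC [t * a2]mulrC.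
  rewrite !expr2 -!mulmxE /JJ /E1 /E2 /E3; mk4ring.
- move=> ha2 t.
  have a2s : a2 ^+ 2 = 1 by case: ha2 => ->; rewrite ?expr1n ?sqrrN ?expr1n.
  have : a1 ^+ 2 + a3 ^+ 2 = 1 - a2 ^+ 2 by rewrite -hsum; ring.
  rewrite a2s subrr => /eqP.
  rewrite paddr_eq0 ?sqr_ge0 // !sqrf_eq0 => /andP [/eqP a10 /eqP a30].
  have A1 : t *: (a1 *: e1 R + a2 *: e2 R + a3 *: e3 R + b *: e4 R)
       = (t * (b - a2)) *: JJ R 0 0 1 + (t * a2) *: munit R 4 4.
    by rewrite a10 a30 /e1 /e2 /e3 /e4 /JJ /E1 /E2 /E3 /E4; mk4ring.
  rewrite /gamma1 A1 A2 (@expm_sJ R _ (t * (b - a2)) (t * a2) 1 (oner_neq0 _) (JJP _ _ _ _) (PJJ _ _ _ _) J3one).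
  rewrite (@expm_sJ R _ (- (t * b)) 0 1 (oner_neq0 _) (JJP _ _ _ _) (PJJ _ _ _ _) J3one).
  rewrite [t * a2]mulrC; have -> : a2 * t = t * b - t * (b - a2) by ring.
  rewrite CV_cols expR0 subrr !mul1r sinN cosN expr1n !divr1 sinB cosB.
  rewrite !expr2 -!mulmxE /JJ /E1 /E2 /E3; mk4ring.
Qed.
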